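(* Let $A\in\mathbb{R}^{m\times n}$, let $T$ be an ordered subset of $r$ elements of $\{1,\dots,n\}$, and let $\hat A:=A[:,T]$ be the $m\times r$ submatrix of $A$ formed by the columns $T$, with $\mathrm{rank}(\hat A)=r$. Let $E:=\mathrm{sign}(\hat A^+)\in\mathbb{R}^{r\times m}$. Then there exist a matrix $W\in\mathbb{R}^{m\times n}$ and a skew-symmetric matrix $U\in\mathbb{R}^{m\times m}$ such that $\hat A^\top W A^\top+\hat A^\top U=E$ and $\langle A,W\rangle=\|\hat A^+\|_1$.
   Context: $\hat A^+$ is the Moore–Penrose pseudoinverse of $\hat A$. $\mathrm{sign}$ is applied entrywise, with $\mathrm{sign}(x)=x/|x|$ for $x\ne 0$ and $\mathrm{sign}(0)=0$. $\langle X,Y\rangle=\mathrm{trace}(X^\top Y)=\sum_{ij}x_{ij}y_{ij}$, and $\|H\|_1=\sum_{i,j}|H_{ij}|$. *)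

(* Defs.v *)
From HB Require Import structures.
From mathcomp Require Import all_boot all_order all_algebra.
From mathcomp Require Import reals.
Set Implicit Arguments. Unset Strict Implicit. Unset Printing Implicit Defensive.
Import Order.TTheory GRing.Theory Num.Theory.
Local Open Scope ring_scope.

Definition is_MP_pinv (R : realType) (m n : nat)
  (A : 'M[R]_(m, n)) (X : 'M[R]_(n, m)) : Prop :=
  [/\ A *m X *m A = A,
      X *m A *m X = X,
      (A *m X)^T = A *m X &
      (X *m A)^T = X *m A].

Definition sgn (R : realType) (x : R) : R := if x == 0 then 0 else x / `|x|.

Definition sign_mx (R : realType) (m n : nat) (A : 'M[R]_(m, n)) : 'M[R]_(m, n) :=
  map_mx (@sgn R) A.

Definition frob_inner (R : realType) (m n : nat) (X Y : 'M[R]_(m, n)) : R :=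
  \sum_(i < m) \sum_(j < n) X i j * Y i j.

Definition entry_l1 (R : realType) (m n : nat) (H : 'M[R]_(m, n)) : R :=
  \sum_(i < m) \sum_(j < n) `|H i j|.

(* A[:,T] for an ordered index selection t : 'I_r -> 'I_n *)
Definition col_sub (R : realType) (m n r : nat) (A : 'M[R]_(m, n))
  (t : 'I_r -> 'I_n) : 'M[R]_(m, r) :=
  \matrix_(i < m, j < r) A i (t j).

(* Main.v *)
Require Import Defs.
From HB Require Import structures.
From mathcomp Require Import all_boot all_order all_algebra.
From mathcomp Require Import reals.
Import Order.TTheory GRing.Theory Num.Theory.
Local Open Scope ring_scope.

Lemma frob_tr (R : realType) (m n : nat) (X Y : 'M[R]_(m, n)) :
  frob_inner X Y = \tr (X^T *m Y).
Proof.
rewrite /frob_inner /mxtrace exchange_big /=; apply: eq_bigr => k _.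
by rewrite !mxE; apply: eq_bigr => i _; rewrite !mxE.
Qed.

Lemma l1_frob (R : realType) (m n : nat) (X : 'M[R]_(m, n)) :
  entry_l1 X = frob_inner X (sign_mx X).
Proof.
rewrite /entry_l1 /frob_inner; apply: eq_bigr => i _; apply: eq_bigr => j _.
rewrite /sign_mx mxE /sgn; case: eqP => [->|/eqP h]; first by rewrite normr0 mulr0.
rewrite mulrA -expr2 -real_normK ?num_real // expr2 -mulrA divff ?mulr1 //.
by rewrite normr_eq0.
Qed.

Theorem lemma3p6 (R : realType) (m n r : nat) (A : 'M[R]_(m, n))
  (t : 'I_r -> 'I_n) (Ap : 'M[R]_(r, m)) :
  injective t ->
  \rank (col_sub A t) = r ->
  is_MP_pinv (col_sub A t) Ap ->
  exists (W : 'M[R]_(m, n)) (U : 'M[R]_m),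
    U^T = - U /\
    (col_sub A t)^T *m W *m A^T + (col_sub A t)^T *m U = sign_mx Ap /\
    frob_inner A W = entry_l1 Ap.
Proof.
move=> _ hrk [h1 h2 h3 h4].
set B := col_sub A t in hrk h1 h2 h3 h4 *.
set E := sign_mx Ap.
pose S : 'M[R]_(r, n) := \matrix_(j, k) (t j == k)%:R.
have hB : B = A *m S^T.
  apply/matrixP => i j; rewrite !mxE (bigD1 (t j)) //= big1 ?addr0.
    by rewrite !mxE eqxx mulr1.
  by move=> k /negbTE hk; rewrite !mxE eq_sym hk mulr0.
have ApB : Ap *m B = 1%:M.
  have : row_full B by rewrite /row_full hrk.
  case/row_fullP => C hC.
  have : B *m (Ap *m B - 1%:M) = 0.
    by rewrite mulmxBr mulmx1 mulmxA; apply/eqP; rewrite subr_eq0; apply/eqP; exact: h1.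
  move=> /(congr1 (mulmx C)); rewrite mulmx0 mulmxA hC mul1mx.
  by move/eqP; rewrite subr_eq0 => /eqP.
have BtApt : B^T *m Ap^T = 1%:M by rewrite -trmx_mul ApB trmx1.
pose X := Ap^T *m E *m Ap^T.
pose F := E - E *m B *m Ap.
have h1' : B *m (Ap *m B) = B by rewrite mulmxA h1.
have FB : F *m B = 0 by rewrite mulmxBl -!mulmxA h1' subrr.
exists (X *m S), (Ap^T *m F - F^T *m Ap); split.
  by rewrite linearB /= !trmx_mul !trmxK opprB.
split.
  have XS : (X *m S) *m A^T = X *m B^T by rewrite -mulmxA hB trmx_mul trmxK.
  rewrite -mulmxA XS.
  rewrite mulmxBr !mulmxA BtApt !mul1mx -trmx_mul FB trmx0 mul0mx subr0.
  rewrite -(mulmxA E) -trmx_mul h3 /F mulmxA addrC subrK.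
  done.
rewrite frob_tr l1_frob frob_tr mulmxA mxtrace_mulC mulmxA.
have -> : S *m A^T = B^T by rewrite hB trmx_mul trmxK.
by rewrite /X !mulmxA BtApt mul1mx mxtrace_mulC.
Qed.
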